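(* Let $\preceq$ be a preorder on a set $\mathcal{X}$ and let $k\ge1$ be an integer. Let $\mathcal{F}\subseteq\{0,\dots,k\}^{\mathcal{X}}$ be a class of functions with $\mathrm{fat}^o_2(\mathcal{F},\mathcal{X})=d$. Then for any $n>d$ and any ordered $\mathcal{X}$-valued tree $\mathbf{x}$ of depth $n$, $$\mathcal{N}_\infty(\mathcal{F},1/2,\mathbf{x})\le\sum_{i=0}^d\binom ni k^i.$$ Hence, for a class $\mathcal{G}\subseteq[-1,1]^{\mathcal{X}}$, for any $\beta>0$ and any ordered $\mathcal{X}$-valued tree $\mathbf{x}$ of depth $n$, $$\mathcal{N}_\infty(\mathcal{G},\beta,\mathbf{x})\le\Big(\frac{2en}{\beta}\Big)^{\mathrm{fat}^o_\beta(\mathcal{G},\mathcal{X})}.$$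
   Context: A preorder is a reflexive, transitive binary relation. An $\mathcal{X}$-valued tree of depth $n$ is a sequence of maps $\mathbf{x}_t:\{0,1\}^{t-1}\to\mathcal{X}$, $t=1,\dots,n$, with $\mathbf{x}_t(y)=\mathbf{x}_t(y_1,\dots,y_{t-1})$ for $y\in\{0,1\}^n$. It is ordered if for every $y\in\{0,1\}^n$, $\mathbf{x}_t(y)\preceq\mathbf{x}_{t+1}(y)$ for all $t=1,\dots,n-1$. For $\mathcal{X}'\subseteq\mathcal{X}$, a class $\mathcal{F}\subseteq\mathbb{R}^{\mathcal{X}}$ shatters at scale $\beta>0$ an ordered $\mathcal{X}'$-valued tree $\mathbf{x}$ of depth $d$ if there is an $\mathbb{R}$-valued witness tree $\mathbf{s}$ of depth $d$ such that for every $y\in\{0,1\}^d$ there exists $f\in\mathcal{F}$ with $(2y_t-1)(f(\mathbf{x}_t(y))-\mathbf{s}_t(y))\ge\beta/2$ for all $t$; $\mathrm{fat}^o_\beta(\mathcal{F},\mathcal{X}')$ is the largest depth of an ordered $\mathcal{X}'$-valued tree shattered at scale $\beta$. A set $V$ of $\mathbb{R}$-valued trees of depth $n$ is a sequential $\gamma$-cover (in $\ell_\infty$) of $\mathcal{F}$ on $\mathbf{x}$ if for every $f\in\mathcal{F}$ and every $y\in\{0,1\}^n$ there is $\mathbf{v}\in V$ with $\max_t|\mathbf{v}_t(y)-f(\mathbf{x}_t(y))|\le\gamma$; $\mathcal{N}_\infty(\mathcal{F},\gamma,\mathbf{x})$ is the size of the smallest such cover. *)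

(* Defs.v *)
From HB Require Import structures.
From mathcomp Require Import all_boot all_order all_algebra.
From mathcomp Require Import all_classical all_reals all_analysis.
Set Implicit Arguments. Unset Strict Implicit. Unset Printing Implicit Defensive.
Import Order.TTheory GRing.Theory Num.Theory.
Local Open Scope ring_scope.

(* A T-valued tree: a node is labelled by the prefix of the path leading to it.
   For a path y : n.-tuple bool and t < n (0-indexed), the paper's
   x_{t+1}(y) = x_{t+1}(y_1,...,y_t) is  x (take t y). *)
Definition tree (T : Type) := seq bool -> T.

Definition ordered_tree (X : Type) (le : X -> X -> Prop) (n : nat) (x : tree X) :=
  forall (y : n.-tuple bool) (t : nat), (t.+1 < n)%N ->
    le (x (take t y)) (x (take t.+1 y)).

Definition tree_valued_in (X : Type) (X' : set X) (n : nat) (x : tree X) :=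
  forall (y : n.-tuple bool) (t : nat), (t < n)%N -> X' (x (take t y)).

Definition shatters_ordered (R : realType) (X : Type) (le : X -> X -> Prop)
    (F : set (X -> R)) (beta : R) (X' : set X) (d : nat) :=
  exists x : tree X, [/\ ordered_tree le d x, tree_valued_in X' d x &
    exists s : tree R, forall y : d.-tuple bool, exists f, F f /\
      forall t : 'I_d,
        beta / 2 <= (2 * (tnth y t)%:R - 1) * (f (x (take t y)) - s (take t y))].

Definition fat_o_eq (R : realType) (X : Type) (le : X -> X -> Prop)
    (F : set (X -> R)) (beta : R) (X' : set X) (d : nat) :=
  shatters_ordered le F beta X' d /\
  forall d', shatters_ordered le F beta X' d' -> (d' <= d)%N.

Definition seq_cover (R : realType) (X : Type) (F : set (X -> R)) (gamma : R)
    (n : nat) (x : tree X) (m : nat) (V : 'I_m -> tree R) :=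
  forall f, F f -> forall y : n.-tuple bool, exists i : 'I_m,
    forall t : 'I_n, `|V i (take t y) - f (x (take t y))| <= gamma.

Definition Ninf_le (R : realType) (X : Type) (F : set (X -> R)) (gamma : R)
    (n : nat) (x : tree X) (B : R) :=
  exists (m : nat) (V : 'I_m -> tree R), seq_cover F gamma n x V /\ m%:R <= B.

(* Main.v *)
Require Import Defs.
From HB Require Import structures.
From mathcomp Require Import all_boot all_order all_algebra.
From mathcomp Require Import all_classical all_reals all_analysis.
From mathcomp Require Import ring lra zify.
Import Order.TTheory GRing.Theory Num.Theory.
Local Open Scope ring_scope.
Set Implicit Arguments. Unset Strict Implicit.

Definition tree0 (R : realType) : tree R := fun _ => 0.

Definition scov (R : realType) (X : Type) (gam : R) (F : set (X -> R)) (n : nat)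
  (x : tree X) (s : seq (tree R)) :=
  forall f, F f -> forall y : n.-tuple bool, exists i, (i < size s)%N /\
    forall t : 'I_n, `|nth (tree0 R) s i (take t y) - f (x (take t y))| <= gam.

Lemma tuple_consP n (P : n.+1.-tuple bool -> Prop) :
  (forall b (y : n.-tuple bool), P [tuple of b :: y]) -> forall y, P y.
Proof. by move=> H y; rewrite (tuple_eta y); apply: H. Qed.

Lemma scov_nil (R : realType) (X : Type) (gam : R) (F : set (X -> R)) n x :
  (forall f, ~ F f) -> scov gam F n x [::].
Proof. by move=> H f Ff; case: (H f Ff). Qed.

Lemma scov_cat (R : realType) (X : Type) (gam : R) (A B G : set (X -> R)) n x s1 s2 :
  scov gam A n x s1 -> scov gam B n x s2 -> (forall f, G f -> A f \/ B f) ->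
  scov gam G n x (s1 ++ s2).
Proof.
move=> H1 H2 HG f /HG [Af|Bf] y.
- have [i [Hi Hb]] := H1 f Af y. exists i; split; first by rewrite size_cat ltn_addr.
  by move=> t; rewrite nth_cat Hi.
- have [i [Hi Hb]] := H2 f Bf y. exists (size s1 + i)%N; split.
    by rewrite size_cat ltn_add2l.
  by move=> t; rewrite nth_cat ltnNge leq_addr /= addKn.
Qed.

Lemma scov_union (R : realType) (X : Type) (gam : R) n x K (C : nat -> set (X -> R))
  (M : nat -> nat) (G : set (X -> R)) :
  (forall f, G f -> exists i, (i < K)%N /\ C i f) ->
  (forall i, (i < K)%N -> exists s, (size s <= M i)%N /\ scov gam (C i) n x s) ->
  exists s, (size s <= \sum_(i < K) M i)%N /\ scov gam G n x s.
Proof.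
elim: K G => [|K IH] G HG HC.
  exists [::]; split => // f Gf; have [i [] //] := HG f Gf.
have [s1 [Hs1 Hc1]] := IH (fun f => exists i, (i < K)%N /\ C i f) (fun f H => H)
   (fun i Hi => HC i (leqW Hi)).
have [s2 [Hs2 Hc2]] := HC K (ltnSn K).
exists (s1 ++ s2); split.
  by rewrite big_ord_recr /= size_cat leq_add.
apply: scov_cat Hc1 Hc2 _ => f /HG [i [Hi Ci]].
have [lt|ge] := ltnP i K; first by left; exists i.
right; have E : i = K by lia.
by rewrite -E.
Qed.

Lemma scov_root (R : realType) (X : Type) (gam : R) (C : set (X -> R)) n (x : tree X)
  (r : R) M (s : bool -> seq (tree R)) :
  (forall f, C f -> `|r - f (x [::])| <= gam) ->
  (forall b, (size (s b) <= M)%N /\ scov gam C n (fun p => x (b :: p)) (s b)) ->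
  scov gam C n.+1 x (mkseq (fun i (p : seq bool) =>
     if p is b :: p' then nth (tree0 R) (s b) i p' else r) M).
Proof.
move=> Hr Hs f Cf; apply: tuple_consP => b y.
have [Hsz Hc] := Hs b.
have [i [Hi Hb]] := Hc f Cf y.
have HiM : (i < M)%N by apply: leq_trans Hsz.
exists i; split; first by rewrite size_mkseq.
case=> [[|t] Ht] /=.
- rewrite nth_mkseq //=; exact: Hr.
- rewrite nth_mkseq //=.
  exact: (Hb (Ordinal (Ht : (t < n)%N))).
Qed.

Lemma ordered_root (X : Type) (le : X -> X -> Prop) n x :
  (forall a, le a a) -> (forall a b c, le a b -> le b c -> le a c) ->
  ordered_tree le n x -> forall (y : n.-tuple bool) t, (t < n)%N ->
  le (x [::]) (x (take t y)).
Proof.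
move=> refl trans Ho y; elim=> [|t IH] Ht; first by rewrite take0.
exact: trans (IH (ltnW Ht)) (Ho y t Ht).
Qed.

Lemma sub_ordered (X : Type) (le : X -> X -> Prop) n x b :
  ordered_tree le n.+1 x -> ordered_tree le n (fun p => x (b :: p)).
Proof. move=> Ho y t Ht; exact: (Ho [tuple of b :: y] t.+1 Ht). Qed.

Lemma sub_valued (X : Type) (le : X -> X -> Prop) (X' : set X) n x b :
  (forall a, le a a) -> (forall a b c, le a b -> le b c -> le a c) ->
  ordered_tree le n.+1 x -> tree_valued_in X' n.+1 x ->
  tree_valued_in (fun c => X' c /\ le (x [::]) c) n (fun p => x (b :: p)).
Proof.
move=> refl trans Ho Hv y t Ht; split; first exact: (Hv [tuple of b :: y] t.+1 Ht).
have := (ordered_root refl trans Ho [tuple of b :: y] (t:=t.+1) Ht). by [].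
Qed.

Lemma shat_nonempty (R : realType) (X : Type) (le : X -> X -> Prop) (F : set (X -> R))
  beta (X' : set X) D : shatters_ordered le F beta X' D -> exists f, F f.
Proof.
case=> z [_ _ [s Hs]]; have [f [Ff _]] := Hs [tuple of nseq D false]; by exists f.
Qed.

Lemma shat0 (R : realType) (X : Type) (le : X -> X -> Prop) (F : set (X -> R))
  beta (X' : set X) (a : X) f : F f -> shatters_ordered le F beta X' 0.
Proof.
move=> Ff; exists (fun _ => a); split => //.
exists (fun _ => 0) => y; exists f; split => //; by case.
Qed.

Lemma shat_mono (R : realType) (X : Type) (le : X -> X -> Prop) (C F : set (X -> R))
  beta (X1 X2 : set X) D :
  (forall f, C f -> F f) -> (forall c, X1 c -> X2 c) ->
  shatters_ordered le C beta X1 D -> shatters_ordered le F beta X2 D.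
Proof.
move=> HCF HX [z [Ho Hv [s Hs]]]; exists z; split=> //.
- by move=> y t Ht; apply: HX; apply: Hv.
- exists s => y; have [f [Cf Hf]] := Hs y; exists f; split => //; exact: HCF.
Qed.

Lemma shat_join (R : realType) (X : Type) (le : X -> X -> Prop) (F F0 F1 : set (X -> R))
  (X' : set X) (a : X) (s0 : R) D :
  X' a ->
  (forall f, F0 f -> F f /\ f a <= s0 - 1) ->
  (forall f, F1 f -> F f /\ s0 + 1 <= f a) ->
  shatters_ordered le F0 2 (fun c => X' c /\ le a c) D ->
  shatters_ordered le F1 2 (fun c => X' c /\ le a c) D ->
  shatters_ordered le F 2 X' D.+1.
Proof.
move=> Xa H0 H1 [z0 [Ho0 Hv0 [w0 Hw0]]] [z1 [Ho1 Hv1 [w1 Hw1]]].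
exists (fun p : seq bool => if p is b :: p' then (if b then z1 p' else z0 p') else a).
split.
- apply: tuple_consP => b y [|t] Ht /=.
  + by case: b; [case: (Hv1 y 0%N Ht) | case: (Hv0 y 0%N Ht)].
  + by case: b; [apply: Ho1 | apply: Ho0].
- apply: tuple_consP => b y [|t] Ht //=.
  by case: b; [case: (Hv1 y t Ht) | case: (Hv0 y t Ht)].
exists (fun p : seq bool => if p is b :: p' then (if b then w1 p' else w0 p') else s0).
apply: tuple_consP; case => y.
- have [f [F1f Hf]] := Hw1 y. have [Ff Hfa] := H1 f F1f. exists f; split => //.
  case=> [[|t] Ht]; rewrite (tnth_nth false) /=; first lra.
  have := Hf (Ordinal (Ht : (t < D)%N)); by rewrite (tnth_nth false).
- have [f [F0f Hf]] := Hw0 y. have [Ff Hfa] := H0 f F0f. exists f; split => //.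
  case=> [[|t] Ht]; rewrite (tnth_nth false) /=; first lra.
  have := Hf (Ordinal (Ht : (t < D)%N)); by rewrite (tnth_nth false).
Qed.

Definition hb (k D n : nat) := (\sum_(i < D) 'C(n, i) * k ^ i)%N.

Lemma hbS k D n : hb k D.+1 n.+1 = (hb k D.+1 n + k * hb k D n)%N.
Proof.
rewrite /hb !big_ord_recl !bin0 -addnA; congr (_ + _)%N.
rewrite big_distrr -big_split /=; apply: eq_bigr => i _.
rewrite /bump leq0n add1n binS expnS. nia.
Qed.

Lemma sumM (a b k : nat) :
  (\sum_(i < k.+1) (if nat_of_ord i is _.+1 then b else a))%N = (a + k * b)%N.
Proof.
rewrite big_ord_recl /=; congr (_ + _)%N.
rewrite (eq_bigr (fun _ => b)); last by move=> i _; case: i.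
by rewrite big_const_ord iter_addn_0 mulnC.
Qed.

Lemma main (R : realType) (X : Type) (le : X -> X -> Prop) (k : nat) :
  (forall a, le a a) -> (forall a b c, le a b -> le b c -> le a c) ->
  forall n D (F : set (X -> R)) (X' : set X) (x : tree X),
  (forall f, F f -> forall a, exists j : nat, (j <= k)%N /\ f a = j%:R) ->
  ordered_tree le n x -> tree_valued_in X' n x ->
  ~ shatters_ordered le F 2 X' D ->
  exists s, (size s <= hb k D n)%N /\ scov (1/2) F n x s.
Proof.
move=> refl trans; elim=> [|n IH] D F X' x Hk Ho Hv Hns.
- case: (pselect (exists f, F f)) => [[f Ff]|nF]; last first.
    exists [::]; split => //; apply: scov_nil => f Ff; apply: nF; by exists f.
  case: D Hns => [|D] Hns.
    by exfalso; apply: Hns; apply: (shat0 _ _ _ (x [::]) Ff).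
  exists [:: tree0 R]; split.
    by rewrite /hb big_ord_recl bin0 expn0.
  move=> g _ y; exists 0%N; split => //; by case.
case: (pselect (exists f, F f)) => [[f0 Ff0]|nF]; last first.
  exists [::]; split => //; apply: scov_nil => f Ff; apply: nF; by exists f.
case: D Hns => [|D] Hns.
  by exfalso; apply: Hns; apply: (shat0 _ _ _ (x [::]) Ff0).
set a := x [::].
have Xa : X' a by exact: (Hv [tuple of nseq n.+1 false] 0%N).
pose Fj (j : nat) := fun f : X -> R => F f /\ f a = j%:R.
pose P j := shatters_ordered le (Fj j) 2 (fun c => X' c /\ le a c) D.
have Hsep : forall j j', P j -> P j' -> (j.+2 <= j')%N -> False.
  move=> j j' Pj Pj' Hjj'; apply: Hns.
  apply: (@shat_join R X le F (Fj j) (Fj j') X' a (j%:R + 1) D Xa _ _ Pj Pj').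
  - by move=> f [Ff ->]; split => //; lra.
  - move=> f [Ff ->]; split => //.
    have : (j.+2%:R <= j'%:R :> R) by rewrite ler_nat.
    rewrite -!natr1; lra.
have [j0 [Hj0k Hj0]] : exists j0, (j0 <= k)%N /\
    forall j, (j <= k)%N -> P j -> j = j0 \/ j = j0.+1.
  case: (pselect (exists j, (j <= k)%N /\ P j)) => [Hex|Hnex]; last first.
    exists 0%N; split => // j Hj Pj; exfalso; apply: Hnex; by exists j.
  have Hex' : exists j, (fun j => `[< (j <= k)%N /\ P j >]) j.
    case: Hex => j Hj; exists j; exact/asboolP.
  case: (ex_minnP Hex') => j0 /asboolP [Hj0k Pj0] Hmin.
  exists j0; split => // j Hj Pj.
  have Hle := Hmin j (asboolT (conj Hj Pj)).
  case: (ltnP j j0.+2) => [Hlt|Hge]; last by exfalso; exact: Hsep j0 j Pj0 Pj Hge.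
  lia.
pose A := fun f : X -> R => F f /\ (f a = j0%:R \/ f a = j0.+1%:R).
pose B (i : nat) := fun f : X -> R => F f /\ f a = (bump j0 i)%:R /\ bump j0 i != j0.+1.
have Hsub : forall (C : set (X -> R)) D', (forall f, C f -> F f) ->
    ~ shatters_ordered le C 2 (fun c => X' c /\ le a c) D' ->
    forall b, exists s, (size s <= hb k D' n)%N /\ scov (1/2) C n (fun p => x (b :: p)) s.
  move=> C D' HCF HC b; apply: (IH D' C (fun c => X' c /\ le a c)).
  - by move=> f Cf; apply: Hk; apply: HCF.
  - exact: sub_ordered.
  - exact: (sub_valued b refl trans Ho Hv).
  - exact: HC.
have Hcomb : forall (C : set (X -> R)) M r, (forall f, C f -> `|r - f a| <= 1/2) ->
    (forall b, exists s, (size s <= M)%N /\ scov (1/2) C n (fun p => x (b :: p)) s) ->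
    exists s, (size s <= M)%N /\ scov (1/2) C n.+1 x s.
  move=> C M r Hr Hb.
  have [s0 [Hs0 Hc0]] := Hb false; have [s1 [Hs1 Hc1]] := Hb true.
  eexists; split; last first.
    apply: (@scov_root R X (1/2) C n x r M (fun b => if b then s1 else s0)) => //.
    by case; split.
  by rewrite size_mkseq.
have HA : exists s, (size s <= hb k D.+1 n)%N /\ scov (1/2) A n.+1 x s.
  apply: (Hcomb _ _ (j0%:R + 1/2)).
    move=> f [_ [->| ->]]; [|rewrite -(natr1 j0)]; rewrite ler_norml; apply/andP; split; lra.
  apply: Hsub; first by move=> f [].
  move=> Hsh; apply: Hns; apply: shat_mono Hsh => [f []| c []] //.
have HB : forall i, (i < k)%N -> exists s, (size s <= hb k D n)%N /\ scov (1/2) (B i) n.+1 x s.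
  move=> i Hi; apply: (Hcomb _ _ (bump j0 i)%:R).
    by move=> f [_ [-> _]]; rewrite subrr normr0; lra.
  apply: Hsub; first by move=> f [].
  move=> Hsh; have [g [Fg [ga Hne]]] := shat_nonempty Hsh.
  have Pj : P (bump j0 i).
    apply: shat_mono Hsh => // f [Ff [fa _]]; by split.
  have Hbk : (bump j0 i <= k)%N by rewrite /bump; lia.
  case: (Hj0 _ Hbk Pj) => E.
    by move: (neq_bump j0 i); rewrite E eqxx.
  by move: Hne; rewrite E eqxx.
have Hcov : forall f, F f -> exists i, (i < k.+1)%N /\
    (fun i => if i is i'.+1 then B i' else A) i f.
  move=> f Ff; have [v [Hvk fa]] := Hk f Ff a.
  case: (pselect (v = j0 \/ v = j0.+1)) => [Hv0|Hv0].
    exists 0%N; split => //; split => //; case: Hv0 => <-; [left|right] => //.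
  exists (unbump j0 v).+1; split.
    rewrite ltnS /unbump; case: (ltnP j0 v) => H /=; lia.
  have Hjv : j0 != v by apply/eqP => E; apply: Hv0; left.
  split => //; rewrite unbumpKcond eq_sym (negbTE Hjv) /= add0n; split => //.
  by apply/eqP => E; apply: Hv0; right.
have HC : forall i, (i < k.+1)%N -> exists s, (size s <=
    (fun i => if i is _.+1 then hb k D n else hb k D.+1 n) i)%N /\
    scov (1/2) ((fun i => if i is i'.+1 then B i' else A) i) n.+1 x s.
  case=> [|i] Hi; [exact: HA | exact: HB].
have [s [Hs Hc]] := scov_union Hcov HC.
exists s; split => //; by rewrite hbS -sumM.
Qed.

Lemma exp_mono n i : (n ^ i <= n.+1 ^ i)%N.
Proof. elim: i => // i IH; rewrite !expnS; apply: leq_mul => //. Qed.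

Lemma bin_le_exp n i : ('C(n, i) <= n ^ i)%N.
Proof.
elim: n i => [|n IH] [|i] //.
rewrite binS; apply: (@leq_trans (n ^ i.+1 + n ^ i)%N); first exact: leq_add.
apply: (@leq_trans (n.+1 * n ^ i)%N); first by rewrite expnS mulSn addnC.
by rewrite [X in (_ <= X)%N]expnS; apply: leq_mul => //; apply: exp_mono.
Qed.

Lemma hb_bound K d n : (1 <= n * K)%N -> (hb K d.+1 n <= d.+1 * (n * K) ^ d)%N.
Proof.
move=> H; rewrite /hb.
apply: (@leq_trans (\sum_(i < d.+1) (n * K) ^ d)%N).
  apply: leq_sum => i _; apply: (@leq_trans (n ^ i * K ^ i)%N).
    by apply: leq_mul => //; apply: bin_le_exp.
  rewrite -expnMn; apply: (leq_pexp2l H); by rewrite -ltnS.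
by rewrite big_const_ord iter_addn_0 mulnC.
Qed.

Unset Implicit Arguments.

Theorem theorem4 (R : realType) (X : Type) (le : X -> X -> Prop) :
  (forall a, le a a) ->
  (forall a b c, le a b -> le b c -> le a c) ->
  (forall (k : nat) (F : set (X -> R)) (d n : nat) (x : tree X),
      (1 <= k)%N ->
      (forall f, F f -> forall a, exists j : nat, (j <= k)%N /\ f a = j%:R) ->
      fat_o_eq le F 2 setT d ->
      (d < n)%N ->
      ordered_tree le n x ->
      Ninf_le F (1 / 2) n x (\sum_(i < d.+1) 'C(n, i) * k ^ i)%N%:R) /\
  (forall (G : set (X -> R)) (beta : R) (d n : nat) (x : tree X),
      (forall g, G g -> forall a, -1 <= g a <= 1) ->
      0 < beta ->
      fat_o_eq le G beta setT d ->
      (0 < n)%N ->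
      ordered_tree le n x ->
      Ninf_le G beta n x ((2 * expR 1 * n%:R / beta) ^+ d)).
Proof.
move=> refl trans; split.
- move=> k F d n x Hk1 Hk Hfat Hdn Ho.
  have Hns : ~ shatters_ordered le F 2 setT d.+1.
    by move=> H; have := Hfat.2 _ H; lia.
  have [s [Hs Hc]] := main refl trans Hk Ho (fun y t _ => I) Hns.
  exists (size s), (fun i => nth (tree0 R) s i); split; last by rewrite ler_nat.
  move=> f Ff y; have [i [Hi Hb]] := Hc f Ff y; exists (Ordinal Hi); exact: Hb.
move=> G beta d n x HG Hb Hfat Hn Ho.
pose K := Num.truncn (2 / beta).
pose disc (g : X -> R) := fun a => (Num.truncn ((g a + 1) / beta))%:R : R.
pose H := fun h => exists g, G g /\ h = disc g.
have Hu : forall g, G g -> forall a, 0 <= (g a + 1) / beta <= 2 / beta.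
  move=> g Gg a; have := HG g Gg a => /andP [H1 H2].
  apply/andP; split; first by apply: divr_ge0 => //; [lra | exact: ltW].
  by rewrite ler_pM2r ?invr_gt0 //; lra.
have HK : forall h, H h -> forall a, exists j, (j <= K)%N /\ h a = j%:R.
  move=> h [g [Gg ->]] a; exists (Num.truncn ((g a + 1) / beta)); split => //.
  by apply: le_truncn; case/andP: (Hu g Gg a).
have Hns : ~ shatters_ordered le H 2 setT d.+1.
  move=> [z [Hoz Hvz [s Hs]]].
  have : (d.+1 <= d)%N; last by lia.
  apply: Hfat.2; exists z; split => //.
  exists (fun p => beta * s p - 1 + beta / 2) => y.
  have [h [[g [Gg ->]] Hh]] := Hs y. exists g; split => // t.
  have := Hh t; rewrite /disc.
  set u := (g (z (take t y)) + 1) / beta.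
  have /andP [Hu0 _] := Hu g Gg (z (take t y)).
  have /andP [Hm1 Hm2] := truncn_itv Hu0; rewrite -/u in Hm1 Hm2.
  have gE : beta * u = g (z (take t y)) + 1.
    by rewrite /u mulrC divfK // gt_eqF.
  move: Hm1 Hm2; rewrite -natr1.
  set m := (Num.truncn u)%:R.
  case: (tnth y t) => /= Hm1 Hm2 H1; nra.
have [s [Hs Hc]] := main refl trans HK Ho (fun y t _ => I) Hns.
exists (size s), (fun i p => beta * nth (tree0 R) s i p - 1 + beta / 2); split.
  move=> g Gg y.
  have [i [Hi Hb']] := Hc (disc g) (ex_intro _ g (conj Gg erefl)) y.
  exists (Ordinal Hi) => t /=. have := Hb' t. rewrite /disc.
  set u := (g (x (take t y)) + 1) / beta.
  have /andP [Hu0 _] := Hu g Gg (x (take t y)).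
  have /andP [Hm1 Hm2] := truncn_itv Hu0; rewrite -/u in Hm1 Hm2.
  have gE : beta * u = g (x (take t y)) + 1.
    by rewrite /u mulrC divfK // gt_eqF.
  move: Hm1 Hm2; rewrite -natr1.
  set m := (Num.truncn u)%:R.
  set v := nth (tree0 R) s i (take t y).
  rewrite !ler_norml => Hm1 Hm2 /andP [H1 H2]; apply/andP; split; nra.
apply: (@le_trans _ _ (hb K d.+1 n)%:R); first by rewrite ler_nat.
case: d Hfat Hs Hns => [|d] Hfat Hs Hns.
  by rewrite /hb big_ord1 bin0 expn0 expr0.
have Hb2 : beta <= 2.
  case: Hfat => [[z [_ _ [s0 Hs0]]] _].
  have [f1 [Gf1 H1]] := Hs0 [tuple of nseq d.+1 true].
  have [f0 [Gf0 H0]] := Hs0 [tuple of nseq d.+1 false].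
  have := H1 ord0; have := H0 ord0; rewrite !tnth_nseq /=.
  have := HG f1 Gf1 (z [::]); have := HG f0 Gf0 (z [::]).
  move=> /andP[? ?] /andP[? ?]; lra.
have HK1 : (1 <= K)%N.
  by rewrite truncn_gt0 ler_pdivlMr // mul1r.
have HKb : K%:R <= 2 / beta.
  by rewrite truncn_le; apply: divr_ge0 => //; exact: ltW.
have HnK : (1 <= n * K)%N by rewrite muln_gt0 Hn.
apply: (@le_trans _ _ (d.+2 * (n * K) ^ d.+1)%N%:R); first by rewrite ler_nat hb_bound.
rewrite natrM natrX natrM.
have -> : 2 * expR 1 * n%:R / beta = expR 1 * (n%:R * (2 / beta)) by ring.
rewrite [X in _ <= X]exprMn; apply: ler_pM.
- by [].
- by apply: exprn_ge0; apply: mulr_ge0.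
- rewrite -expRM_natl mulr1 -natr1 addrC; exact: expR_ge1Dx.
- apply: lerXn2r; rewrite ?nnegrE.
  + by apply: mulr_ge0.
  + by apply: mulr_ge0 => //; apply: divr_ge0 => //; exact: ltW.
  + by apply: ler_wpM2l.
Qed.
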